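(* For all integers $q\ge1$ and $n\ge1$, the number of nonattacking placements of $q$ unlabelled semibishops on the $n\times n$ square board is $$u_{\mathsf Q^{01}}(q;n)=(-1)^q\sum_{k=0}^q s(n+1,n+1-k)\,s(n,n-(q-k)),$$ which is a polynomial function of $n$ of degree $2q$.
   Context: The semibishop $\mathsf Q^{01}$ is the rider with the single basic move $(1,1)$: two pieces at positions $z,z'\in[n]^2=\{1,\dots,n\}^2$ attack each other if $z'-z$ is an integer multiple of $(1,1)$ (including $z=z'$). $u_{\mathsf Q^{01}}(q;n)$ counts the sets of $q$ positions in $[n]^2$ no two of which attack each other. $s(a,b)$ denotes the signed Stirling number of the first kind, taken to be $0$ if $b<0$ or $b>a$. *)

(* Defs.v *)
From mathcomp Require Import all_boot all_order all_algebra.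
Set Implicit Arguments. Unset Strict Implicit. Unset Printing Implicit Defensive.
Import Order.TTheory GRing.Theory Num.Theory.
Local Open Scope ring_scope.

Fixpoint stirling1 (a b : nat) {struct a} : int :=
  match a, b with
  | 0%N, 0%N => 1
  | 0%N, _.+1 => 0
  | _.+1, 0%N => 0
  | a'.+1, b'.+1 => stirling1 a' b' - (a'%:Z) * stirling1 a' b'.+1
  end.

Definition stirling1z (a : nat) (b : int) : int :=
  match b with
  | Posz b' => stirling1 a b'
  | Negz _ => 0
  end.

(* Board [n]^2, represented 0-indexed as 'I_n * 'I_n (a translation of
   {1..n}^2, which does not affect differences of positions). *)
Definition pos (n : nat) := ('I_n * 'I_n)%type.

(* Semibishop Q^{01}: z and z' attack each other iff z' - z is an integer
   multiple of (1,1), i.e. both coordinate differences equal the same t. *)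
Definition semibishop_attack (n : nat) (z z' : pos n) : bool :=
  ((z'.1 : nat)%:Z - (z.1 : nat)%:Z == (z'.2 : nat)%:Z - (z.2 : nat)%:Z).

Definition nonattacking (n : nat) (S : {set pos n}) : bool :=
  [forall z in S, forall z' in S, (z != z') ==> ~~ semibishop_attack z z'].

Definition u_semibishop (q n : nat) : nat :=
  #|[set S : {set pos n} | (#|S| == q) && nonattacking S]|.

(* Main.v *)
Require Import Defs.
From mathcomp Require Import all_boot all_order all_algebra zify ring lra.
Import Order.TTheory GRing.Theory Num.Theory.
Local Open Scope ring_scope.
Set Implicit Arguments. Unset Strict Implicit. Unset Printing Implicit Defensive.

Lemma big_opt (R : nmodType) (T : finType) (F : option T -> R) :
  \sum_(o : option T) F o = F None + \sum_(t : T) F (Some t).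
Proof.
by rewrite ![index_enum _]unlock [@Finite.enum in LHS]unlock/= big_cons big_map.
Qed.

Definition Bp (m : nat) : {poly rat} := ('X + 1) ^+ m.

Arguments Bp m : simpl never.
Lemma BpS m : Bp m.+1 = Bp m * 'X + Bp m.
Proof. by rewrite /Bp exprSr mulrDr mulr1. Qed.

Lemma Bp_coef m : (forall j, (m < j)%N -> (Bp m)`_j = 0) /\ (Bp m)`_m = 1.
Proof.
elim: m => [|m [IH1 IH2]].
  by split; [move=> [|j] //; rewrite /Bp expr0 coefC | rewrite /Bp expr0 coefC].
split.
  move=> j hj; rewrite BpS coefD coefMX; case: j hj => [//|j] hj /=.
  by rewrite IH1 // IH1 ?addr0 //; lia.
by rewrite BpS coefD coefMX /= IH2 IH1 ?addr0.
Qed.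

Lemma Bp_coef2 m : (Bp m.+1)`_m = m.+1%:R.
Proof.
elim: m => [|m IH].
  by rewrite BpS coefD coefMX /= /Bp expr0 coef1 add0r.
by rewrite BpS coefD coefMX /= IH (proj2 (Bp_coef _)) -[m.+2]addn1 natrD.
Qed.

Lemma antidiff (f : {poly rat}) : {F : {poly rat} |
  (forall x, F.[x+1] - F.[x] = f.[x]) /\ (size F <= (size f).+1)%N /\
  F`_(size f) = lead_coef f / (size f)%:R}.
Proof.
move: {2}(size f) (leqnn (size f)) => N; elim: N f => [|N IH] f hf.
  move: hf; rewrite leqn0 size_poly_eq0 => /eqP ->.
  by exists 0; split => [x|]; rewrite ?horner0 ?subrr ?size_poly0 ?lead_coef0 ?mul0r ?coef0.
have [f0|nz] := eqVneq f 0.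
  by exists 0; rewrite f0; split => [x|]; rewrite ?horner0 ?subrr ?size_poly0 ?lead_coef0 ?mul0r ?coef0.
move: hf; case Ef: (size f) => [|d] hd.
  by move: nz; rewrite -size_poly_eq0 Ef.
set c := lead_coef f.
have dn0 : (d.+1%:R : rat) != 0 by rewrite pnatr_eq0.
pose H := (c / d.+1%:R) *: (Bp d.+1 - 'X^(d.+1)).
have sfHd : (size (f - H)%R <= d)%N.
  apply/leq_sizeP => j hj.
  rewrite coefB coefZ coefB coefXn.
  have [->|hj'] := eqVneq j d.
    rewrite Bp_coef2 /c lead_coefE Ef /=.
    have -> : (d == d.+1) = false by lia.
    by rewrite subr0 mulfVK // subrr.
  have hj2 : (d < j)%N by lia.
  have -> : f`_j = 0 by rewrite nth_default // Ef.
  have [->|hj3] := eqVneq j d.+1.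
    by rewrite (proj2 (Bp_coef _)) subrr mulr0 subrr.
  rewrite (proj1 (Bp_coef _)); last by lia.
  by rewrite mulr0 subrr.
have sfH : (size (f - H)%R <= N)%N by lia.
have [F' [hF1 [hF2 hF3]]] := IH _ sfH.
have sF' : (size F' <= d.+1)%N.
  apply: leq_trans hF2 _.
  lia.
exists (F' + (c / d.+1%:R) *: 'X^(d.+1)); split; [|split].
- move=> x; rewrite !hornerE.
  have := hF1 x; rewrite !hornerE /Bp => h.
  set A := F'.[x+1] in h *; set B := F'.[x] in h *; set C := c / _ in h *; set P := (x+1)^+_ in h *; set Q := x^+_ in h *. transitivity ((A - B) + C * (P - Q)); first ring. by rewrite h; ring.
- apply: (leq_trans (size_add _ _)); rewrite geq_max; apply/andP; split; first lia.
  by apply: (leq_trans (size_scale_leq _ _)); rewrite size_polyXn.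
- by rewrite coefD coefZ coefXn eqxx mulr1 nth_default ?add0r.
Qed.

Definition Cpoly (a : nat) : {poly int} := \prod_(i < a) (1 + i%:R *: 'X).
Definition D (a k : nat) : int := (Cpoly a)`_k.

Lemma D0k k : D 0 k = (k == 0%N)%:R.
Proof. by rewrite /D /Cpoly big_ord0 coef1. Qed.

Lemma Da0 a : D a 0 = 1.
Proof.
elim: a => [|a IH]; first by rewrite D0k.
by rewrite /D /Cpoly big_ord_recr /= mulrDr mulr1 -scalerAr coefD coefZ coefMX /= -/(Cpoly a) -/(D a 0) IH mulr0 addr0.
Qed.

Lemma DSS a k : D a.+1 k.+1 = D a k.+1 + a%:R * D a k.
Proof.
by rewrite /D /Cpoly big_ord_recr /= mulrDr mulr1 -scalerAr coefD coefZ coefMX.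
Qed.

Lemma size_eq_coef (F : {poly rat}) m : (size F <= m.+1)%N -> F`_m != 0 ->
  size F = m.+1 /\ lead_coef F = F`_m.
Proof.
move=> h1 h2.
have h3 : size F = m.+1.
  apply/eqP; rewrite eqn_leq h1 /=; rewrite ltnNge; apply/negP => h.
  by move: h2; rewrite nth_default.
by rewrite lead_coefE h3.
Qed.

Lemma Dpoly k : {P : {poly rat} | size P = (2 * k).+1 /\ 0 < lead_coef P /\
  forall a, P.[a%:R] = (D a k)%:~R}.
Proof.
elim: k => [|k [P [hs [hl he]]]].
  exists 1; split; first by rewrite size_poly1.
  by split; [rewrite lead_coef1 | move=> a; rewrite Da0 hornerC].
have Pn0 : P != 0 by rewrite -size_poly_eq0 hs.
have [F [hF1 [hF2 hF3]]] := antidiff (P * 'X).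
have sPX : size (P * 'X)%R = (2 * k).+2 by rewrite size_mulX // hs.
have lF : 0 < F`_(2 * k).+2.
  by rewrite sPX in hF3; rewrite hF3 lead_coefMX divr_gt0 // ltr0n.
have [sF lcF] := @size_eq_coef F (2 * k).+2 ltac:(by rewrite -sPX) ltac:(by rewrite gt_eqF).
exists (F - (F.[0])%:P).
have sC : (size (- (F.[0])%:P)%R < size F)%N by rewrite size_opp sF (leq_ltn_trans (size_polyC_leq1 _)).
split; [|split].
- by rewrite size_addl // sF; lia.
- by rewrite lead_coefDl // lcF.
- elim=> [|a IH]; first by rewrite !hornerE subrr D0k.
  rewrite DSS -natr1 !hornerE in IH *.
  have := hF1 a%:R; rewrite hornerM hornerX he => h.
  rewrite -[F.[a%:R + 1]](subrK F.[a%:R]) h.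
  rewrite intrD intrM -IH /=.
  by rewrite rmorph_nat; ring.
Qed.

Lemma D_big a k : (a < k)%N -> D a k = 0.
Proof.
elim: a k => [|a IH] [|k] //= h; first by rewrite D0k.
by rewrite DSS !IH ?mulr0 ?addr0 //; lia.
Qed.

Lemma D_diag a : D a.+1 a.+1 = 0.
Proof.
elim: a => [|a IH]; first by rewrite DSS D0k mul0r addr0.
by rewrite DSS IH D_big ?mulr0 ?addr0.
Qed.

Lemma stir_big a b : (a < b)%N -> stirling1 a b = 0.
Proof.
elim: a b => [|a IH] [|b] //= h.
by rewrite !IH ?mulr0 ?subr0 //; lia.
Qed.

Lemma stir_D a k : (k <= a)%N -> stirling1 a (a - k) = (-1) ^+ k * D a k.
Proof.
elim: a k => [|a IH] k hk.
  have -> : k = 0%N by lia.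
  by rewrite D0k expr0 mul1r.
case: k hk => [|k] hk.
  rewrite subn0 /= (stir_big (ltnSn a)) mulr0 subr0 expr0 mul1r Da0.
  by have := IH 0%N (leq0n _); rewrite subn0 expr0 mul1r Da0.
rewrite subSS.
have [ka|ka] := ltnP k a.
  have -> : (a - k = (a - k.+1).+1)%N by lia.
  rewrite /= IH //; have -> : (a - k.+1).+1 = (a - k)%N by lia.
  rewrite IH; last by lia.
  rewrite DSS exprS natz; ring.
have -> : k = a by lia.
by rewrite subnn D_diag mulr0.
Qed.

Lemma stirz_D a k : stirling1z a (a%:Z - k%:Z) = (-1) ^+ k * D a k.
Proof.
have [h|h] := leqP k a.
  by rewrite subzn // /= stir_D.
rewrite D_big // mulr0.
have -> : a%:Z - k%:Z = Negz (k - a).-1 by rewrite NegzE; lia.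
by [].
Qed.

Section Generic.
Variables (T B : finType) (f : T -> B).

Definition valid (S : {set T}) :=
  [forall z in S, forall z' in S, (z != z') ==> (f z != f z')].

Lemma validP (S : {set T}) : reflect {in S &, injective f} (valid S).
Proof.
apply: (iffP idP).
  move=> /forallP h z z' hz hz' e; have := h z; rewrite hz /= => /forallP /(_ z').
  by rewrite hz' e eqxx /= implybF negbK => /eqP.
move=> h; apply/forallP => z; apply/implyP => hz; apply/forallP => z'; apply/implyP => hz'.
by apply/implyP => ne; apply/negP => /eqP e; move: ne; rewrite (h _ _ hz hz' e) eqxx.
Qed.

Definition okb (b : B) (o : option T) := if o is Some t then f t == b else true.
Definition ok (g : {ffun B -> option T}) := [forall b, okb b (g b)].
Definition ns (g : {ffun B -> option T}) := #|[set b | g b != None]|.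
Definition toF (S : {set T}) : {ffun B -> option T} := [ffun b => [pick t in S | f t == b]].
Definition ofF (g : {ffun B -> option T}) : {set T} := [set t | g (f t) == Some t].

Lemma ok_toF (S : {set T}) : ok (toF S).
Proof.
apply/forallP => b; rewrite /okb ffunE.
by case: pickP => // t /andP[].
Qed.

Lemma ofF_toF (S : {set T}) : valid S -> ofF (toF S) = S.
Proof.
move/validP => h; apply/setP => t; rewrite inE ffunE.
case: pickP => [t' /andP[ht' /eqP e]|].
  apply/eqP/idP => [[<-] //| ht]; congr Some; exact: h.
by move=> /(_ t); rewrite eqxx andbT => ->.
Qed.

Lemma valid_ofF g : valid (ofF g).
Proof.
apply/validP => z z'; rewrite !inE => /eqP h /eqP h' e.
by move: h; rewrite e h' => -[].
Qed.

Lemma toF_ofF g : ok g -> toF (ofF g) = g.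
Proof.
move/forallP => h; apply/ffunP => b; rewrite ffunE.
case: pickP => [t /andP[]|].
  by rewrite inE => /eqP e /eqP <-.
move=> hn; have := h b; rewrite /okb; case E: (g b) => [t|] // /eqP ft.
by have := hn t; rewrite inE ft E !eqxx.

Qed.

Lemma card_ofF g : ok g -> #|ofF g| = ns g.
Proof.
move=> /forallP h.
rewrite -(card_in_imset (f := f)); last by apply/validP/valid_ofF.
rewrite /ns; apply: eq_card => b; rewrite inE.
apply/imsetP/idP.
  by move=> [t]; rewrite inE => /eqP e ->; rewrite e.
case E: (g b) => [t|] // _.
have := h b; rewrite /okb E => /eqP ft.
by exists t => //; rewrite inE ft E.
Qed.

Lemma count_generic q :
  #|[set S : {set T} | (#|S| == q) && valid S]| =
  #|[set g : {ffun B -> option T} | ok g && (ns g == q)]|.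
Proof.
rewrite -(card_in_imset (f := toF)); last first.
  move=> S1 S2; rewrite !inE => /andP[_ h1] /andP[_ h2] e.
  by rewrite -(ofF_toF h1) e ofF_toF.
apply: eq_card => g; rewrite inE.
apply/imsetP/idP.
  move=> [S]; rewrite inE => /andP[/eqP hS hv] ->.
  by rewrite ok_toF /= -card_ofF ?ok_toF // ofF_toF // hS.
move=> /andP[hok /eqP hn]; exists (ofF g); last by rewrite toF_ofF.
by rewrite inE valid_ofF card_ofF // hn eqxx.
Qed.


Lemma factor_sum b :
  (1 + #|[set t | f t == b]|%:R *: 'X : {poly int}) =
  \sum_(o : option T) (if okb b o then 'X^(o != None) else 0).
Proof.
rewrite big_opt /= expr0; congr (_ + _).
rewrite -big_mkcond /= sumr_const scaler_nat; congr (_ *+ _).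
by apply: eq_card => t; rewrite inE.
Qed.

Lemma prod_term (g : {ffun B -> option T}) :
  \prod_(b : B) (if okb b (g b) then 'X^(g b != None) else 0 : {poly int}) =
  if ok g then 'X^(ns g) else 0.
Proof.
case: ifP => [/forallP h|].
  rewrite (eq_bigr (fun b => 'X^(g b != None))); last by move=> b _; rewrite h.
  rewrite -(big_morph (fun n => 'X^n) (@exprD _ 'X) (expr0 _) _ _ (fun b => nat_of_bool (g b != None))); congr ('X^_).
  rewrite /ns -sum1_card [RHS]big_mkcond /=; apply: eq_bigr => b _; rewrite inE.
  by case: (g b != None).
move/negbT; rewrite negb_forall => /existsP [b hb].
by rewrite (bigD1 b) //= (negbTE hb) mul0r.
Qed.

Lemma gen_poly q :
  (\prod_(b : B) (1 + #|[set t | f t == b]|%:R *: 'X) : {poly int})`_q =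
  #|[set g : {ffun B -> option T} | ok g && (ns g == q)]|%:R.
Proof.
rewrite (eq_bigr _ (fun b _ => factor_sum b)) bigA_distr_bigA /=.
rewrite (eq_bigr _ (fun g _ => prod_term g)) coef_sum.
  rewrite -sum1_card natr_sum [RHS]big_mkcond /=; apply: eq_bigr => g _; rewrite inE.
by case: (ok g); rewrite /= ?coef0 // coefXn eq_sym; case: (ns g == q).
Qed.
End Generic.

Definition diag n (z : pos n) : 'I_n + 'I_n :=
  if (z.2 <= z.1)%N then
    inl (@Ordinal n (z.1 - z.2) (leq_ltn_trans (leq_subr _ _) (ltn_ord z.1)))
  else inr (@Ordinal n (z.2 - z.1.+1) (leq_ltn_trans (leq_subr _ _) (ltn_ord z.2))).

Lemma attack_diag n (z z' : pos n) : semibishop_attack z z' = (diag z == diag z').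
Proof.
case: z => [x y]; case: z' => [x' y']; rewrite /semibishop_attack /diag /=.
case: leqP => h1; case: leqP => h2 /=.
- apply/eqP/eqP => [e|[e]]; [congr inl; apply: val_inj => /=|]; lia.
- by apply/negbTE/negP => /eqP e; lia.
- by apply/negbTE/negP => /eqP e; lia.
- apply/eqP/eqP => [e|[e]]; [congr inr; apply: val_inj => /=|]; lia.
Qed.

Lemma card_setE (T : finType) (P : pred T) : #|[set t | P t]| = (\sum_t (P t : nat))%N.
Proof. by rewrite -sum1_card [LHS]big_mkcond /=; apply: eq_bigr => t _; rewrite inE; case: (P t). Qed.

Lemma sum_eqm n (c : bool) (m : nat) : (\sum_(y < n) ((c && (val y == m)) : nat))%N = (c && (m < n)%N).
Proof.
case: c => /=; last by rewrite big1.
elim: n => [|n IH]; first by rewrite big_ord0.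
rewrite big_ord_recr /= IH; case: (ltngtP m n) => h /=.
- by rewrite ltnS ltnW.
- by rewrite ltnS leqNgt h.
- by rewrite h ltnSn.
Qed.

Lemma sum_ge n m : (\sum_(x < n) ((m <= val x)%N : nat))%N = (n - m)%N.
Proof.
elim: n => [|n IH]; first by rewrite big_ord0.
by rewrite big_ord_recr /= IH; case: leqP => h /=; lia.
Qed.

Lemma sum_lt n k : (\sum_(x < n) ((val x + k < n)%N : nat))%N = (n - k)%N.
Proof.
rewrite -sum_ge. rewrite (reindex_inj rev_ord_inj) /=; apply: eq_bigr => i _.
case: i => i hi /=; congr nat_of_bool; lia.
Qed.

Lemma inl_eq n (a b : 'I_n) : (inl a == inl b :> 'I_n + 'I_n) = (a == b).
Proof. by []. Qed.
Lemma inr_eq n (a b : 'I_n) : (inr a == inr b :> 'I_n + 'I_n) = (a == b).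
Proof. by []. Qed.

Lemma card_inl n (d : 'I_n) : #|[set t : pos n | diag t == inl d]| = (n - d)%N.
Proof.
rewrite card_setE.
transitivity (\sum_(x < n) \sum_(y < n) ((diag (x, y) == inl d) : nat))%N.
  by rewrite pair_bigA; apply: eq_bigr => -[x y].
rewrite -sum_ge; apply: eq_bigr => x _.
rewrite (eq_bigr (fun y : 'I_n => ((d <= x)%N && (val y == x - d)%N) : nat)).
  rewrite sum_eqm; congr nat_of_bool; case: x => x hx /=; lia.
move=> y _; rewrite /diag /=; case: leqP => h /=.
  by rewrite inl_eq -val_eqE /=; lia.
lia.
Qed.

Lemma card_inr n (e : 'I_n) : #|[set t : pos n | diag t == inr e]| = (n - e.+1)%N.
Proof.
rewrite card_setE.
transitivity (\sum_(x < n) \sum_(y < n) ((diag (x, y) == inr e) : nat))%N.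
  by rewrite pair_bigA; apply: eq_bigr => -[x y].
rewrite -sum_lt; apply: eq_bigr => x _.
rewrite (eq_bigr (fun y : 'I_n => (true && (val y == x + e.+1)%N) : nat)).
  by rewrite sum_eqm /= addnS.
move=> y _; rewrite /diag /=; case: leqP => h /=.
  lia.
by rewrite inr_eq -val_eqE /=; lia.
Qed.

Lemma board_prod n :
  (\prod_(b : 'I_n + 'I_n) (1 + #|[set t : pos n | diag t == b]|%:R *: 'X) : {poly int})
  = Cpoly n.+1 * Cpoly n.
Proof.
rewrite big_sumType /= /Cpoly big_ord_recl /= scale0r addr0 mul1r.
congr (_ * _).
  rewrite (reindex_inj rev_ord_inj) /=; apply: eq_bigr => i _.
  rewrite card_inl /=; congr (1 + _%:R *: _); rewrite /bump leq0n add1n; case: i => i hi /=; lia.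
rewrite (reindex_inj rev_ord_inj) /=; apply: eq_bigr => i _.
by rewrite card_inr /=; congr (1 + _%:R *: _); case: i => i hi /=; lia.
Qed.

Lemma u_coef q n : (u_semibishop q n)%:Z = (Cpoly n.+1 * Cpoly n)`_q.
Proof.
rewrite -board_prod gen_poly -count_generic /u_semibishop.
rewrite natz; congr Posz; apply: eq_card => S; rewrite !inE.
congr (_ && _).
apply: eq_forallb => z; congr (_ ==> _); apply: eq_forallb => z'.
by congr (_ ==> _); congr (_ ==> _); rewrite attack_diag.
Qed.

Lemma sum_size m s (F : 'I_m.+1 -> {poly rat}) :
  (forall i, size (F i) = s.+1 /\ 0 < lead_coef (F i)) ->
  size (\sum_i F i) = s.+1 /\ 0 < lead_coef (\sum_i F i).
Proof.
elim: m F => [|m IH] F hF.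
  by rewrite big_ord1; apply: hF.
rewrite big_ord_recr /=.
have [s1 l1] := IH (fun i => F (widen_ord (leqnSn _) i)) (fun i => hF _).
have [s2 l2] := hF ord_max.
set p := \sum_(i < m.+1) _ in s1 l1 *.
have hc : 0 < (p + F ord_max)`_s.
  by rewrite coefD; move: l1 l2; rewrite !lead_coefE s1 s2 /=; apply: addr_gt0.
have := @size_eq_coef (p + F ord_max) s.
rewrite (leq_trans (size_add _ _)) ?s1 ?s2 ?maxnn // gt_eqF // => /(_ isT isT) [-> ->].
by [].
Qed.

Lemma term_size q (k : 'I_q.+1) :
  let P1 := sval (Dpoly k) in let P2 := sval (Dpoly (q - k)) in
  size ((P1 \Po ('X + 1%:P)) * P2) = (2 * q).+1 /\
  0 < lead_coef ((P1 \Po ('X + 1%:P)) * P2).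
Proof.
move=> P1 P2.
have [s1 [l1 _]] := svalP (Dpoly k).
have [s2 [l2 _]] := svalP (Dpoly (q - k)).
rewrite -/P1 in s1 l1; rewrite -/P2 in s2 l2.
have n1 : P1 \Po ('X + 1%:P) != 0.
  by rewrite -size_poly_eq0 size_comp_poly2 ?size_XaddC // s1.
have n2 : P2 != 0 by rewrite -size_poly_eq0 s2.
rewrite size_mul // size_comp_poly2 ?size_XaddC // s1 s2 lead_coefM lead_coef_comp ?size_XaddC //.
rewrite lead_coefXaddC expr1n mulr1 mulr_gt0 //; split => //.
have := ltn_ord k; lia.
Qed.

Unset Implicit Arguments.

Theorem theorem7p2 (q : nat) : (1 <= q)%N ->
  (forall n : nat, (1 <= n)%N ->
     (u_semibishop q n)%:Z =
     (-1) ^+ q * \sum_(k < q.+1)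
        stirling1z n.+1 (n.+1%:Z - (k : nat)%:Z) *
        stirling1z n (n%:Z - (q - k)%N%:Z))
  /\
  (exists p : {poly rat}, size p = (2 * q).+1 /\
     forall n : nat, (1 <= n)%N -> p.[n%:R] = (u_semibishop q n)%:R).
Proof.
move=> hq.
have key : forall n, (u_semibishop q n)%:Z = \sum_(k < q.+1) D n.+1 k * D n (q - k).
  by move=> n; rewrite u_coef coefM.
split.
  move=> n _; rewrite key big_distrr /=; apply: eq_bigr => k _.
  rewrite !stirz_D.
  have hk : (k <= q)%N by have := ltn_ord k; lia.
  have -> : (-1) ^+ q = (-1) ^+ k * (-1) ^+ (q - k) :> int by rewrite -exprD subnKC.
  set a := (-1) ^+ k; set b := (-1) ^+ (q - k).
  have ha : a * a = 1 by rewrite /a -exprMn mulrNN mulr1 expr1n.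
  have hb : b * b = 1 by rewrite /b -exprMn mulrNN mulr1 expr1n.
  transitivity ((a * a) * (b * b) * (D n.+1 k * D n (q - k))); last by ring.
  by rewrite ha hb !mul1r.
exists (\sum_(k < q.+1) ((sval (Dpoly k) \Po ('X + 1%:P)) * sval (Dpoly (q - k)))).
split; first exact: (proj1 (sum_size (fun k => term_size k))).
move=> n _.
rewrite -[(u_semibishop q n)%:R]/((u_semibishop q n)%:Z%:~R : rat) key.
rewrite horner_sum rmorph_sum /=; apply: eq_bigr => k _.
have [_ [_ e1]] := svalP (Dpoly k).
have [_ [_ e2]] := svalP (Dpoly (q - k)).
by rewrite hornerM horner_comp !hornerE natr1 e1 e2 rmorphM.
Qed.
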